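(* Let $\Omega$ be a topological signature, $X$ a topological space, and $\mathcal B$ a Boolean subalgebra of $\mathcal P(T_\Omega(X))$ satisfying condition $(\ast)$. For $w\in\Omega_n$ and ultrafilters $U_1,\dots,U_n$ of $\mathcal B$, let $w(U_1,\dots,U_n)$ be the set of all $L\in\mathcal B$ for which there are $L_i\in U_i$ ($i=1,\dots,n$) with $w(L_1,\dots,L_n)\subseteq L$ (here $w(L_1,\dots,L_n)=\{w(t_1,\dots,t_n):t_i\in L_i\}$). Then each $w(U_1,\dots,U_n)$ is an ultrafilter of $\mathcal B$, and the evaluation maps $(w,U_1,\dots,U_n)\mapsto w(U_1,\dots,U_n)$ make the Stone dual space $\mathcal B^\star$ a Stone topological $\Omega$-algebra. Moreover, if every $L\in\mathcal B$ is such that $L\cap X$ is open in $X$, then the map $X\to\mathcal B^\star$, $x\mapsto U_x=\{L\in\mathcal B:x\in L\}$, is a generating mapping.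
   Context: $T_\Omega(X)$ is the term algebra on $X$: finite ordered trees with leaves labeled in $X\uplus\Omega_0$ and nodes with $k$ children labeled in $\Omega_k$, topologized as the topological sum over tree shapes of products of label spaces; $X$ is identified with single-node trees; $E_n:\Omega_n\times T_\Omega(X)^n\to T_\Omega(X)$ is its evaluation map. $\mathcal P(S)$ is the Boolean algebra of all subsets of $S$, and $\mathcal P_{co}(S)$ that of clopen subsets of a space $S$. For a Boolean subalgebra $\mathcal B$ of $\mathcal P(T_\Omega(X))$, let $\mathcal B'_n$ be the Boolean subalgebra of $\mathcal P(\Omega_n\times T_\Omega(X)^n)$ generated by all sets $K\times L_1\times\cdots\times L_n$ with $K$ clopen in $\Omega_n$ and $L_i\in\mathcal B$. Condition $(\ast)$: for every $n$ and every $L\in\mathcal B$, $E_n^{-1}(L)\in\mathcal B'_n$. $\mathcal B^\star$ is the set of ultrafilters of $\mathcal B$ with basic open sets $\{U: L\in U\}$, $L\in\mathcal B$. A Stone topological algebra is a compact Hausdorff 0-dimensional space with continuous evaluation maps $\Omega_n\times A^n\to A$. A generating mapping is a continuous map $X\to A$ whose image generates a dense subalgebra of $A$. *)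

(* Defs.v *)
From HB Require Import structures.
From mathcomp Require Import all_boot all_order all_algebra.
From mathcomp Require Import all_classical all_reals all_analysis.
Set Implicit Arguments. Unset Strict Implicit. Unset Printing Implicit Defensive.
Import Order.TTheory GRing.Theory Num.Theory.
Local Open Scope classical_set_scope.

(** Term algebra T_Omega(X): finite ordered trees; leaves are variables
    [Var x] or nullary symbols [Node 0 w _]; a node with n children is
    labelled by a symbol of arity n. *)
Inductive term (X : Type) (Om : nat -> Type) : Type :=
| Var : X -> term X Om
| Node : forall n : nat, Om n -> ('I_n -> term X Om) -> term X Om.
Arguments Var {X Om}.
Arguments Node {X Om n}.

Definition Eval {X : Type} {Om : nat -> Type} (n : nat)
  (p : Om n * ('I_n -> term X Om)) : term X Om := Node p.1 p.2.

Definition is_boolalg (S : Type) (B : set (set S)) : Prop :=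
  [/\ B setT, (forall L, B L -> B (~` L)) & (forall L M, B L -> B M -> B (L `|` M))].

Definition gen_boolalg (S : Type) (G : set (set S)) : set (set S) :=
  [set L | forall C, is_boolalg C -> G `<=` C -> C L].

Definition Bprime {X : Type} (Om : nat -> topologicalType)
  (B : set (set (term X Om))) (n : nat) : set (set (Om n * ('I_n -> term X Om))) :=
  gen_boolalg [set P | exists (K : set (Om n)) (Ls : 'I_n -> set (term X Om)),
    [/\ clopen K, (forall i, B (Ls i)) & P = [set p | K p.1 /\ forall i, Ls i (p.2 i)]]].

Definition cond_star {X : Type} (Om : nat -> topologicalType)
  (B : set (set (term X Om))) : Prop :=
  forall n (L : set (term X Om)), B L -> @Bprime X Om B n (@Eval X Om n @^-1` L).

Definition ultrafilter_of (S : Type) (B : set (set S)) (U : set (set S)) : Prop :=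
  [/\ U `<=` B, U setT /\ ~ U set0,
      (forall L M, U L -> B M -> L `<=` M -> U M),
      (forall L M, U L -> U M -> U (L `&` M)) &
      (forall L, B L -> U L \/ U (~` L))].

Definition stone (S : Type) (B : set (set S)) : Type := {U : set (set S) | ultrafilter_of B U}.

HB.instance Definition _ (S : Type) (B : set (set S)) := gen_eqMixin (stone B).
HB.instance Definition _ (S : Type) (B : set (set S)) := gen_choiceMixin (stone B).
(* topology generated by the basic open sets {U | L \in U}, L in B
   (for a Boolean algebra B these sets form a base, closed under finite
   intersections, so the generated topology is the one with that base) *)
HB.instance Definition _ (S : Type) (B : set (set S)) :=
  isSubBaseTopological.Build (stone B) B (fun L => [set U : stone B | proj1_sig U L]).

Definition wU {X : Type} {Om : nat -> Type} (B : set (set (term X Om)))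
  (n : nat) (w : Om n) (Us : 'I_n -> set (set (term X Om))) : set (set (term X Om)) :=
  [set L | B L /\ exists Ls : 'I_n -> set (term X Om), (forall i, Us i (Ls i)) /\
     [set Node w ts | ts in [set ts : 'I_n -> term X Om | forall i, Ls i (ts i)]] `<=` L].

Definition zero_dim (A : topologicalType) : Prop :=
  forall (x : A) (O : set A), open O -> O x -> exists V, [/\ clopen V, V x & V `<=` O].

Definition stone_top_alg (Om : nat -> topologicalType) (A : topologicalType)
  (ev : forall n, Om n * {ptws 'I_n -> A} -> A) : Prop :=
  [/\ compact [set: A], hausdorff_space A, zero_dim A & forall n, continuous (ev n)].

Definition gen_subalg (Om : nat -> topologicalType) (A : topologicalType)
  (ev : forall n, Om n * {ptws 'I_n -> A} -> A) (Y : set A) : set A :=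
  [set a | forall C : set A, Y `<=` C ->
     (forall n (w : Om n) (as_ : 'I_n -> A), (forall i, C (as_ i)) -> C (ev n (w, as_))) ->
     C a].

Definition generating_map (Om : nat -> topologicalType) (X A : topologicalType)
  (ev : forall n, Om n * {ptws 'I_n -> A} -> A) (f : X -> A) : Prop :=
  continuous f /\ dense (gen_subalg ev (range f)).

(* Main.v *)
Require Import Defs.
From HB Require Import structures.
From mathcomp Require Import all_boot all_order all_algebra.
From mathcomp Require Import all_classical all_reals all_analysis.
Local Open Scope classical_set_scope.
Set Implicit Arguments. Unset Strict Implicit. Unset Printing Implicit Defensive.
Section BoolAlg.
Context (S : Type) (B : set (set S)) (HB : is_boolalg B).

Lemma BT : B setT. Proof. by case: HB. Qed.
Lemma BC L : B L -> B (~` L). Proof. by case: HB => _ h _; apply h. Qed.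
Lemma BU L M : B L -> B M -> B (L `|` M). Proof. by case: HB => _ _ h; apply h. Qed.
Lemma B0 : B set0. Proof. by rewrite -setCT; apply/BC/BT. Qed.
Lemma BI L M : B L -> B M -> B (L `&` M).
Proof. by move=> hL hM; rewrite -[L `&` M]setCK setCI; apply/BC/BU; apply BC. Qed.

Lemma B_bigcap (s : seq (set S)) : (forall L, L \in s -> B L) ->
  B [set t : S | forall L : set S, L \in s -> L t].
Proof.
elim: s => [_|L s IH H].
  have -> : [set t : S | forall L : set S, L \in [::] -> L t] = setT.
    by apply/seteqP; split=> // t _ L; rewrite in_nil.
  exact: BT.
have -> : [set t : S | forall M : set S, M \in L :: s -> M t] = L `&` [set t : S | forall L : set S, L \in s -> L t].
  apply/seteqP; split=> t.
    by move=> h; split; [apply: h; rewrite inE eqxx|move=> M Ms; apply: h; rewrite inE Ms orbT].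
  by case=> hL hs M; rewrite inE => /orP [/eqP ->|/hs].
apply: BI; first by apply: H; rewrite inE eqxx.
by apply: IH => M Ms; apply: H; rewrite inE Ms orbT.
Qed.

Section UF.
Context (u : set (set S)) (hu : ultrafilter_of B u).
Lemma uf_B L : u L -> B L. Proof. by case: hu => h _ _ _ _; apply h. Qed.
Lemma uf_T : u setT. Proof. by case: hu => _ [] . Qed.
Lemma uf_n0 : ~ u set0. Proof. by case: hu => _ [] . Qed.
Lemma uf_up L M : u L -> B M -> L `<=` M -> u M. Proof. by case: hu => _ _ h _ _; apply h. Qed.
Lemma uf_I L M : u L -> u M -> u (L `&` M). Proof. by case: hu => _ _ _ h _; apply h. Qed.
Lemma uf_or L : B L -> u L \/ u (~` L). Proof. by case: hu => _ _ _ _ h; apply h. Qed.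
Lemma uf_ne L : u L -> exists t, L t.
Proof.
move=> hL; apply: contrapT => hn; apply: uf_n0.
suff <- : L = set0 by [].
by apply/seteqP; split=> // t Lt; apply: hn; exists t.
Qed.
Lemma uf_notC L : u L -> ~ u (~` L).
Proof. by move=> hL hC; apply: uf_n0; rewrite -(setICr L); apply: uf_I. Qed.
Lemma uf_C L : B L -> ~ u L -> u (~` L).
Proof. by move=> hB hn; case: (uf_or hB). Qed.
Lemma uf_bigcap (s : seq (set S)) : (forall L, L \in s -> u L) ->
  u [set t : S | forall L : set S, L \in s -> L t].
Proof.
elim: s => [_|L s IH H].
  have -> : [set t : S | forall L : set S, L \in [::] -> L t] = setT.
    by apply/seteqP; split=> // t _ L; rewrite in_nil.
  exact: uf_T.
have -> : [set t : S | forall M : set S, M \in L :: s -> M t] = L `&` [set t : S | forall L : set S, L \in s -> L t].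
  apply/seteqP; split=> t.
    by move=> h; split; [apply: h; rewrite inE eqxx|move=> M Ms; apply: h; rewrite inE Ms orbT].
  by case=> hL hs M; rewrite inE => /orP [/eqP ->|/hs].
apply: uf_I; first by apply: H; rewrite inE eqxx.
by apply: IH => M Ms; apply: H; rewrite inE Ms orbT.
Qed.
End UF.

Lemma stone_nbhs (u : stone B) (A : set (stone B)) :
  nbhs u A <-> exists L, [/\ B L, sval u L & [set v : stone B | sval v L] `<=` A].
Proof.
split.
  rewrite /nbhs /= /nbhs_of_open /=.
  case=> C [[D' sD' E] H2 H3].
  rewrite -E in H2 H3. case: H2 => i Di bi.
  have := sD' i Di; cbn; case => fs fsB fsE. rewrite -fsE in bi.
  exists [set t : S | forall L : set S, L \in finmap.enum_fset fs -> L t]; split.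
  - by apply: B_bigcap => L Ls; apply/set_mem/fsB.
  - by apply: uf_bigcap; [exact: (proj2_sig u)| move=> L Ls; apply: bi].
  - move=> v hv; apply: H3; exists i => //; rewrite -fsE; cbn => L Ls.
    apply: uf_up (hv) _ _; first exact: (proj2_sig v).
      by apply/set_mem/fsB.
    by move=> t /(_ L Ls).
case=> L [hL uL sub].
rewrite /nbhs /= /nbhs_of_open /=.
exists [set v : stone B | sval v L]; split => //.
exists [set [set v : stone B | sval v L]].
  move=> _ -> /=. exact: finI_from1.
by rewrite bigcup_set1.
Qed.


Lemma stone_eq (u v : stone B) : sval u = sval v -> u = v.
Proof.
case: u v => [u hu] [v hv] /= e; subst v.
by rewrite (Prop_irrelevance hu hv).
Qed.

Lemma stone_open L : B L -> open [set v : stone B | sval v L].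
Proof.
move=> hL; rewrite openE => v hv; rewrite /interior /=.
by apply/stone_nbhs; exists L; split.
Qed.

Lemma stone_compl L : B L ->
  [set v : stone B | sval v L] = ~` [set v : stone B | sval v (~` L)].
Proof.
move=> hL; apply/seteqP; split=> v /=.
  by move=> h; apply: uf_notC (proj2_sig v) _ h.
by move=> h; apply: contrapT => h'; apply: h; apply: uf_C (proj2_sig v) _ _ _.
Qed.

Lemma stone_clopen L : B L -> clopen [set v : stone B | sval v L].
Proof.
move=> hL; split; first exact: stone_open.
rewrite stone_compl //; apply: open_closedC; apply: stone_open; exact: BC.
Qed.

Lemma stone_zero_dim : zero_dim (stone B).
Proof.
move=> x O oO Ox.
have : nbhs x O by move: oO; rewrite openE; apply.
case/stone_nbhs => L [hL xL sub].
by exists [set v : stone B | sval v L]; split => //; apply: stone_clopen.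
Qed.

Lemma stone_hausdorff : hausdorff_space (stone B).
Proof.
move=> p q H; apply: contrapT => pq.
have [L hL] : exists L, ~ (sval p L <-> sval q L).
  apply: contrapT => hn; apply: pq; apply: stone_eq; apply: funext => L.
  apply: propext; apply: contrapT => h; apply: hn; by exists L.
have key : forall (p q : stone B), cluster (nbhs p) q -> sval p L -> ~ sval q L -> False.
  move=> p' q' H' pL qL.
  have BL : B L by apply: uf_B (proj2_sig p') _ pL.
  have qC : sval q' (~` L) by apply: uf_C (proj2_sig q') _ _ _.
  have n1 : nbhs p' [set v : stone B | sval v L].
    by apply/stone_nbhs; exists L; split.
  have n2 : nbhs q' [set v : stone B | sval v (~` L)].
    by apply/stone_nbhs; exists (~` L); split => //; apply: BC.
  have [v [vL vC]] := H' _ _ n1 n2.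
  by apply: uf_notC (proj2_sig v) _ vL vC.
case: (pselect (sval p L)) => pL.
  apply: (key p q H pL) => qL; apply: hL; by split.
have qL : sval q L by apply: contrapT => qL; apply: hL; split.
apply: (key q p _ qL pL).
move=> A C qA pC; rewrite setIC; exact: H pC qA.
Qed.

Lemma stone_compact : compact [set: stone B].
Proof.
rewrite compact_ultra => F FU _.
pose U := [set L | B L /\ F [set v : stone B | sval v L]].
have hU : ultrafilter_of B U.
  split.
  - by move=> L [].
  - split.
      split; first exact: BT.
      by apply: filterS (filterT); move=> v _; apply: uf_T (proj2_sig v).
    case=> _ h; apply: (@filter_not_empty _ F _).
    by apply: filterS h => v /= /(uf_n0 (proj2_sig v)).
  - move=> L M [_ hL] hM LM; split => //; apply: filterS hL => v /= vL.
    exact: (uf_up (proj2_sig v) vL hM LM).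
  - move=> L M [hL FL] [hM FM]; split; first exact: BI.
    apply: filterS (filterI FL FM) => v [vL vM]; exact: (uf_I (proj2_sig v) vL vM).
  - move=> L hL; case: (in_ultra_setVsetC [set v : stone B | sval v L] FU) => h.
      by left.
    right; split; first exact: BC.
    apply: filterS h => v /= vL; exact: (uf_C (proj2_sig v) hL vL).
exists (exist _ U hU); split => //.
move=> A /stone_nbhs [L [hL [_ FL] sub]]; exact: filterS sub FL.
Qed.

End BoolAlg.
Section Terms.
Context (Om : nat -> topologicalType) (X : topologicalType)
  (B : set (set (term X Om))) (HB : is_boolalg B) (Hs : cond_star B).

Local Notation T := (term X Om).

Definition box n (K : set (Om n)) (Ls : 'I_n -> set T) : set (Om n * ('I_n -> T)) :=
  [set p | K p.1 /\ forall i, Ls i (p.2 i)].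

Definition VV n (w : Om n) (Us : 'I_n -> set (set T)) (P : set (Om n * ('I_n -> T))) :=
  exists K Ls, [/\ clopen K, K w, (forall i, Us i (Ls i)) & box K Ls `<=` P].

Section Fixed.
Context n (w : Om n) (Us : 'I_n -> set (set T)) (hUs : forall i, ultrafilter_of B (Us i)).

Lemma pick_in (Ls : 'I_n -> set T) : (forall i, Us i (Ls i)) ->
  exists ts : 'I_n -> T, forall i, Ls i (ts i).
Proof.
move=> h.
have h' : forall i, exists t, Ls i t by move=> i; exact: (uf_ne (hUs i) (h i)).
case: (boolp.choice h') => ts hts; by exists ts.
Qed.

Lemma VV_up P Q : VV w Us P -> P `<=` Q -> VV w Us Q.
Proof.
case=> K [Ls [cK Kw hL sub]] PQ; exists K, Ls; split => //.
exact: subset_trans sub PQ.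
Qed.

Lemma VV_I P Q : VV w Us P -> VV w Us Q -> VV w Us (P `&` Q).
Proof.
case=> K [Ls [cK Kw hL sub]] [K' [Ls' [cK' Kw' hL' sub']]].
exists (K `&` K'), (fun i => Ls i `&` Ls' i); split.
- exact: clopenI.
- by [].
- by move=> i; apply: (uf_I (hUs i)).
- move=> p [[pK pK'] hp]; split.
    by apply: sub; split => // i; case: (hp i).
  by apply: sub'; split => // i; case: (hp i).
Qed.

Lemma VV_T : VV w Us setT.
Proof.
exists setT, (fun _ => setT); split => //.
- exact: clopenT.
- by move=> i; apply: (uf_T (hUs i)).
Qed.

Lemma VV_not_both P : VV w Us P -> VV w Us (~` P) -> False.
Proof.
move=> h1 h2; case: (VV_I h1 h2) => K [Ls [cK Kw hL sub]].
case: (pick_in hL) => ts hts.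
by case: (sub (w, ts)).
Qed.

Lemma VV_or P : @Bprime X Om B n P -> VV w Us P \/ VV w Us (~` P).
Proof.
move=> hP; apply: (hP [set P | VV w Us P \/ VV w Us (~` P)]).
  split.
  - by left; apply: VV_T.
  - move=> L [h|h]; [right; by rewrite setCK | by left].
  - move=> L M [hL|hL] [hM|hM].
    + by left; apply: VV_up hL _; apply: subsetUl.
    + by left; apply: VV_up hL _; apply: subsetUl.
    + by left; apply: VV_up hM _; apply: subsetUr.
    + by right; rewrite setCU; apply: VV_I.
move=> _ [K [Ls [cK hLs ->]]].
case: (pselect (K w)) => Kw; last first.
  right; exists (~` K), (fun _ => setT); split => //.
  - exact: clopenC.
  - by move=> i; apply: (uf_T (hUs i)).
  - by move=> p [pK _] [pK' _].
case: (pselect (forall i, Us i (Ls i))) => hall.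
  by left; exists K, Ls; split.
have [j hj] : exists j, ~ Us j (Ls j).
  apply: contrapT => h; apply: hall => i; apply: contrapT => hi; apply: h; by exists i.
right; exists setT, (fun i => if i == j then ~` Ls j else setT); split => //.
- exact: clopenT.
- move=> i; case: eqP => [->|_]; last by apply: (uf_T (hUs i)).
  exact: (uf_C (hUs j) (hLs j) hj).
- move=> p [_ hp] [_ hp']; have := hp j; rewrite eqxx; apply; exact: hp'.
Qed.

Lemma wU_iff L : B L -> wU B w Us L <-> VV w Us (@Eval X Om n @^-1` L).
Proof.
move=> hL; split.
  case=> _ [Ls [hLs sub]].
  case: (VV_or (Hs hL : @Bprime X Om B n _)) => // h.
  exfalso; case: (VV_I (VV_T) h) => K [Ls' [cK Kw hL' sub']].
  have hI : forall i, Us i (Ls i `&` Ls' i) by move=> i; apply: (uf_I (hUs i)).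
  case: (pick_in hI) => ts hts.
  have : ((@Eval X Om n) @^-1` L) (w, ts).
    by apply: sub; exists ts => // i; case: (hts i).
  by case: (sub' (w, ts)) => //; split => // i; case: (hts i).
case=> K [Ls [cK Kw hLs sub]]; split => //; exists Ls; split => //.
by move=> _ [ts hts <-]; apply: (sub (w, ts)).
Qed.

Lemma wU_uf : ultrafilter_of B (wU B w Us).
Proof.
split.
- by move=> L [].
- split.
    split; first exact: BT.
    by exists (fun _ => setT); split => // i; apply: (uf_T (hUs i)).
  case=> _ [Ls [hLs sub]].
  case: (pick_in hLs) => ts hts.
  by apply: (sub (Node w ts)); exists ts.
- move=> L M [_ [Ls [hLs sub]]] hM LM; split => //; exists Ls; split => //.
  exact: subset_trans sub LM.
- move=> L M [hL [Ls [hLs sub]]] [hM [Ms [hMs subM]]]; split; first exact: BI.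
  exists (fun i => Ls i `&` Ms i); split; first by move=> i; apply: (uf_I (hUs i)).
  move=> _ [ts hts <-]; split.
    by apply: sub; exists ts => // i; case: (hts i).
  by apply: subM; exists ts => // i; case: (hts i).
- move=> L hL; case: (VV_or (Hs hL : @Bprime X Om B n _)) => h.
    by left; apply/wU_iff.
  right; apply/wU_iff; first exact: BC.
  exact: h.
Qed.

End Fixed.


Definition principal (t : T) : set (set T) := [set L | B L /\ L t].

Lemma principal_uf t : ultrafilter_of B (principal t).
Proof.
split.
- by move=> L [].
- by split; [split => //; exact: BT | case].
- by move=> L M [_ Lt] hM LM; split => //; apply: LM.
- by move=> L M [hL Lt] [hM Mt]; split; [exact: BI|].
- move=> L hL; case: (pselect (L t)) => h; first by left.
  by right; split => //; exact: BC.
Qed.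

Lemma wU_principal n (w : Om n) (ts : 'I_n -> T) :
  wU B w (fun i => principal (ts i)) = principal (Node w ts).
Proof.
rewrite /principal; apply/seteqP; split => L /=.
  case=> hL [Ls [hLs sub]]; split => //; apply: sub; exists ts => // i; by case: (hLs i).
case=> hL hLt; apply/(wU_iff w (fun i => principal_uf (ts i)) hL).
case: (VV_or w (fun i => principal_uf (ts i)) (Hs hL : @Bprime X Om B n _)) => h; first exact: h.
exfalso; case: h => K [Ls [cK Kw hLs sub]].
by apply: (sub (w, ts)) => //; split => // i; exact: (proj2 (hLs i)).
Qed.

Definition ev n (p : Om n * {ptws 'I_n -> stone B}) : stone B :=
  exist _ (wU B p.1 (fun i => sval (p.2 i))) (wU_uf p.1 (fun i => proj2_sig (p.2 i))).

Lemma ev_cont n : continuous (@ev n).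
Proof.
move=> p A /(stone_nbhs HB) [L [hL pL sub]].
have hUs := fun i => proj2_sig (p.2 i).
case: (proj1 (wU_iff p.1 hUs hL) pL) => K [Ls [cK Kw hLs bsub]].
pose N2 := [set g : {ptws 'I_n -> stone B} | forall i, sval (g i) (Ls i)].
apply: (@filterS _ _ _ [set q | K q.1 /\ N2 q.2]).
  move=> q [qK qN]; apply: sub => /=.
  apply/(wU_iff q.1 (fun i => proj2_sig (q.2 i)) hL).
  by exists K, Ls; split.
exists (K, N2); last by move=> q [].
split.
  by apply: open_nbhs_nbhs; split => //; case: cK.
have hf := @filter_forall _ 'I_n (fun i (g : {ptws 'I_n -> stone B}) => sval (g i) (Ls i)) (nbhs p.2) _.
apply: hf => i.
have hc := @proj_continuous _ (fun _ : 'I_n => stone B) i p.2.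
have hN : nbhs (p.2 i) [set v : stone B | sval v (Ls i)].
  apply/(stone_nbhs HB); exists (Ls i); split => //; exact: (uf_B (hUs i)).
exact: (hc _ hN).
Qed.

Definition ptu (t : T) : stone B := exist _ (principal t) (principal_uf t).

Lemma ev_ptu n (w : Om n) ts : ev (w, fun i => ptu (ts i)) = ptu (Node w ts).
Proof. by apply: stone_eq => /=; exact: wU_principal. Qed.

Lemma gen_ptu t : gen_subalg (@ev) (range (fun x => ptu (Var x))) (ptu t).
Proof.
elim: t => [x|n w ts IH] C YC hC.
  by apply: YC; exists x.
rewrite -ev_ptu; apply: (hC) => i; exact: (IH i C YC hC).
Qed.

End Terms.

Unset Implicit Arguments.

Theorem theorem5p5 (Om : nat -> topologicalType) (X : topologicalType)
  (B : set (set (term X Om))) :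
  is_boolalg B -> cond_star B ->
  (forall n (w : Om n) (Us : 'I_n -> stone B),
      ultrafilter_of B (wU B w (fun i => proj1_sig (Us i)))) /\
  exists ev : forall n, Om n * {ptws 'I_n -> stone B} -> stone B,
    (forall n (w : Om n) (Us : 'I_n -> stone B),
        proj1_sig (ev n (w, Us)) = wU B w (fun i => proj1_sig (Us i))) /\
    stone_top_alg ev /\
    ((forall L, B L -> open (@Var X Om @^-1` L)) ->
     exists f : X -> stone B,
       (forall x, proj1_sig (f x) = [set L | B L /\ L (Var x)]) /\
       generating_map ev f).
Proof.
move=> HB Hs; split.
  by move=> n w Us; exact: (wU_uf HB Hs w (fun i => proj2_sig (Us i))).
exists (ev HB Hs); split; first by [].
split.
  split; [exact: stone_compact | exact: stone_hausdorff | exact: stone_zero_dim |].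
  by move=> n; exact: ev_cont.
move=> Hopen; exists (fun x => ptu HB (Var x)); split => //.
split.
- move=> x A /(stone_nbhs HB) [L [hL [_ xL] sub]].
  apply: (@filterS _ _ _ (@Var X Om @^-1` L)).
    by move=> y hy; apply: sub; split.
  by apply: open_nbhs_nbhs; split => //; exact: Hopen.
- move=> O [u Ou] oO.
  have : nbhs u O by move: oO; rewrite openE; apply.
  case/(stone_nbhs HB) => L [hL uL sub].
  case: (uf_ne (proj2_sig u) uL) => t Lt.
  exists (ptu HB t); split; first by apply: sub; split.
  exact: gen_ptu.
Qed.
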